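(* The class of chain graphs is degree sandwich monotone; that is, for every chain graph $G$ and every set $F\subseteq E(G)$ such that $G-F$ is a chain graph, every degree-minimal edge $e$ in $F$ satisfies that $G-e$ is a chain graph.
   Context: A chain graph is a bipartite graph whose vertex set can be partitioned into two independent sets $X,Y$ such that the neighborhoods of the vertices of $X$ are linearly ordered by inclusion. Given a graph $G$ and $F\subseteq E(G)$, an edge $e\in F$ is degree-minimal in $F$ if its endpoints can be named $u,v$ so that (i) $u$ has the smallest degree in $G$ among all vertices incident to an edge of $F$, and (ii) $v$ has the smallest degree in $G$ among all vertices $w$ with $uw\in F$. *)

(* Defs.v *)
(* A finite simple graph is a symmetric irreflexive relation
   g on a finite vertex type T. Edges are 2-element vertex sets {u,v}. *)
From mathcomp Require Import all_boot all_order.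
Set Implicit Arguments. Unset Strict Implicit. Unset Printing Implicit Defensive.

Section Graphs.
Variable T : finType.

Definition nbhd (g : rel T) (x : T) : {set T} := [set y | g x y].
Definition deg (g : rel T) (x : T) : nat := #|nbhd g x|.

Definition edges (g : rel T) : {set {set T}} :=
  [set [set x; y] | x in T, y in T & g x y].

Definition del_edges (g : rel T) (F : {set {set T}}) : rel T :=
  fun x y => g x y && ([set x; y] \notin F).

Definition del_edge (g : rel T) (f : {set T}) : rel T := del_edges g [set f].

Definition chain_graph (g : rel T) : Prop :=
  exists X : {set T},
    [/\ (forall x y, x \in X -> y \in X -> ~~ g x y),
        (forall x y, x \notin X -> y \notin X -> ~~ g x y) &
        (forall x x', x \in X -> x' \in X ->
           (nbhd g x \subset nbhd g x') \/ (nbhd g x' \subset nbhd g x))].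

Definition degree_minimal (g : rel T) (F : {set {set T}}) (f : {set T}) : Prop :=
  f \in F /\
  exists u v, [/\ f = [set u; v],
    (forall w z, [set w; z] \in F -> deg g u <= deg g w) &
    (forall w, [set u; w] \in F -> deg g v <= deg g w)].

End Graphs.

(* Main.v *)
Require Import Defs.
From mathcomp Require Import all_boot all_order.
Set Implicit Arguments. Unset Strict Implicit. Unset Printing Implicit Defensive.

Section S.
Variable T : finType.

Lemma NK (h : rel T) (hsym : symmetric h) a b c d :
  chain_graph h -> h a b -> h c d -> ~~ h a d -> ~~ h c b -> ~~ h a c ->
  ~~ h b d -> False.
Proof.
case=> X [i1 i2 nest] hab hcd nad ncb nac nbd.
have side : forall x y, h x y -> (x \in X) = ~~ (y \in X).
  move=> x y hxy; case: (boolP (x \in X)) => xX; case: (boolP (y \in X)) => yX //.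
    by move: (i1 _ _ xX yX); rewrite hxy.
  by move: (i2 _ _ xX yX); rewrite hxy.
have sab := side _ _ hab; have scd := side _ _ hcd.
case: (boolP (a \in X)) => aX; case: (boolP (c \in X)) => cX.
- case: (nest _ _ aX cX) => /subsetP S.
    by move: (S b); rewrite !inE hab (negbTE ncb) => /(_ isT).
  by move: (S d); rewrite !inE hcd (negbTE nad) => /(_ isT).
- have dX : d \in X by rewrite -[d \in X]negbK -scd.
  case: (nest _ _ aX dX) => /subsetP S.
    by move: (S b); rewrite !inE hab (hsym d) (negbTE nbd) => /(_ isT).
  by move: (S c); rewrite !inE (hsym d) hcd (negbTE nac) => /(_ isT).
- have bX : b \in X by rewrite -[b \in X]negbK -sab.
  case: (nest _ _ bX cX) => /subsetP S.
    by move: (S a); rewrite !inE (hsym b) hab (hsym c) (negbTE nac) => /(_ isT).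
  by move: (S d); rewrite !inE hcd (negbTE nbd) => /(_ isT).
- have bX : b \in X by rewrite -[b \in X]negbK -sab.
  have dX : d \in X by rewrite -[d \in X]negbK -scd.
  case: (nest _ _ bX dX) => /subsetP S.
    by move: (S a); rewrite !inE (hsym b) hab (hsym d) (negbTE nad) => /(_ isT).
  by move: (S c); rewrite !inE (hsym d) hcd (hsym b) (negbTE ncb) => /(_ isT).
Qed.

Lemma degL (g : rel T) (gsym : symmetric g) a b c d :
  chain_graph g -> g a b -> g c d -> g a d -> ~~ g c b -> deg g c < deg g a.
Proof.
move=> ch gab gcd gad ncb.
have ch' := ch; case: ch' => X [i1 i2 _].
have side : forall x y, g x y -> (x \in X) = ~~ (y \in X).
  move=> x y hxy; case: (boolP (x \in X)) => xX; case: (boolP (y \in X)) => yX //.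
    by move: (i1 _ _ xX yX); rewrite hxy.
  by move: (i2 _ _ xX yX); rewrite hxy.
have nside : forall x y, (x \in X) = (y \in X) -> ~~ g x y.
  move=> x y E; apply/negP => gxy; move: (side _ _ gxy); rewrite E.
  by case: (y \in X).
rewrite /deg; apply: proper_card; apply/properP; split.
  apply/subsetP => y; rewrite !inE => gcy.
  apply/negPn/negP => nay.
  apply: (NK gsym ch gab gcy nay ncb).
    apply: nside; move: (side _ _ gab) (side _ _ gcd) (side _ _ gad) (side _ _ gcy).
    by case: (a \in X); case: (b \in X); case: (c \in X); case: (d \in X); case: (y \in X).
  apply: nside; move: (side _ _ gab) (side _ _ gcd) (side _ _ gad) (side _ _ gcy).
  by case: (a \in X); case: (b \in X); case: (c \in X); case: (d \in X); case: (y \in X).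
by exists b; rewrite !inE // ncb.
Qed.

Lemma del_sym (g : rel T) (gsym : symmetric g) F : symmetric (del_edges g F).
Proof. by move=> x y; rewrite /del_edges gsym setUC. Qed.

Lemma set2_eq (u v a d : T) : [set u; v] = [set a; d] ->
  (u = a /\ v = d) \/ (u = d /\ v = a).
Proof.
move=> E.
have uin : u \in [set a; d] by rewrite -E !inE eqxx.
have vin : v \in [set a; d] by rewrite -E !inE eqxx orbT.
have ain : a \in [set u; v] by rewrite E !inE eqxx.
have din : d \in [set u; v] by rewrite E !inE eqxx orbT.
move: uin vin ain din; rewrite !inE.
move=> /orP[/eqP Eu|/eqP Eu] /orP[/eqP Ev|/eqP Ev] /orP[/eqP Ea|/eqP Ea] /orP[/eqP Ed|/eqP Ed]; subst; auto.
Qed.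

Lemma core2 (g : rel T) (gsym : symmetric g) (F : {set {set T}}) f a b c d :
  chain_graph g -> chain_graph (del_edges g F) -> degree_minimal g F f ->
  g a b -> g c d -> g a d -> f = [set a; d] -> ~~ g c b -> ~~ g a c -> ~~ g b d ->
  False.
Proof.
move=> ch chF [fF [u [v [fuv H1 H2]]]] gab gcd gad fE ncb nac nbd.
have dca := degL gsym ch gab gcd gad ncb.
have nbc : ~~ g b c by rewrite gsym.
have gdc : g d c by rewrite gsym.
have gba : g b a by rewrite gsym.
have gda : g d a by rewrite gsym.
have dbd := degL gsym ch gdc gba gda nbc.
have [abF cdF] : [set a; b] \notin F /\ [set c; d] \notin F.
  case: (set2_eq (etrans (esym fuv) fE)) => [[Eu Ev]|[Eu Ev]]; subst u v; split;
    apply/negP => inF.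
  - by move: (H2 _ inF); rewrite leqNgt dbd.
  - by move: (H1 _ _ inF); rewrite leqNgt dca.
  - by move: (H1 b a); rewrite setUC => /(_ inF); rewrite leqNgt dbd.
  - by move: (H2 c); rewrite setUC => /(_ inF); rewrite leqNgt dca.
apply: (NK (del_sym gsym F) chF (a:=a) (b:=b) (c:=c) (d:=d)).
- by rewrite /del_edges gab abF.
- by rewrite /del_edges gcd cdF.
- by rewrite /del_edges -fE fF andbF.
- by rewrite /del_edges (negbTE ncb).
- by rewrite /del_edges (negbTE nac).
- by rewrite /del_edges (negbTE nbd).
Qed.

End S.

Theorem theorem4p9 (T : finType) (g : rel T)
    (gsym : symmetric g) (girr : irreflexive g)
    (F : {set {set T}}) (f : {set T}) :
  chain_graph g ->
  F \subset edges g ->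
  chain_graph (del_edges g F) ->
  degree_minimal g F f ->
  chain_graph (del_edge g f).
Proof.
move=> ch FE chF dm.
have ch' := ch; case: ch' => X [i1 i2 nest].
pose h := del_edge g f.
have hg : forall x y, h x y -> g x y by move=> x y /andP[].
exists X; split.
- by move=> x y xX yX; apply/negP => /hg; apply/negP; apply: i1.
- by move=> x y xX yX; apply/negP => /hg; apply/negP; apply: i2.
move=> x x' xX x'X.
case: (boolP (nbhd h x \subset nbhd h x')) => [S|/subsetPn [b]]; first by left.
rewrite !inE => hxb nx'b.
case: (boolP (nbhd h x' \subset nbhd h x)) => [S|/subsetPn [d]]; first by right.
rewrite !inE => hx'd nxd.
exfalso.
have gxb := hg _ _ hxb; have gx'd := hg _ _ hx'd.
have bX : b \notin X by apply/negP => bX; move: (i1 _ _ xX bX); rewrite gxb.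
have dX : d \notin X by apply/negP => dX; move: (i1 _ _ x'X dX); rewrite gx'd.
have nxx' := i1 _ _ xX x'X.
have nbd := i2 _ _ bX dX.
have key : forall a b c d, g a b -> g c d -> g a d -> ~~ h a d -> h a b -> h c d ->
    ~~ g c b -> ~~ g a c -> ~~ g b d -> False.
  move=> a0 b0 c0 d0 gab gcd gad nad hab hcd ncb nac nbd0.
  have fE : f = [set a0; d0].
    by move: nad; rewrite /h /del_edge /del_edges gad /= negbK inE => /eqP.
  exact: (core2 gsym ch chF dm gab gcd gad fE ncb nac nbd0).
case: (boolP (g x d)) => gxd; case: (boolP (g x' b)) => gx'b.
- have fE1 : f = [set x; d].
    by move: nxd; rewrite /h /del_edge /del_edges gxd /= negbK inE => /eqP.
  have fE2 : f = [set x'; b].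
    by move: nx'b; rewrite /h /del_edge /del_edges gx'b /= negbK inE => /eqP.
  have xin : x \in [set x'; b] by rewrite -fE2 fE1 !inE eqxx.
  move: xin; rewrite !inE => /orP[/eqP E|/eqP E].
    by move: nxd; rewrite E hx'd.
  subst b; have din : d \in [set x'; x] by rewrite -fE2 fE1 !inE eqxx orbT.
  move: din; rewrite !inE => /orP[/eqP E|/eqP E].
    by move: nxx'; rewrite -E gxd.
  by move: hxb; rewrite /h /del_edge /del_edges fE1 E inE eqxx andbF.
- exact: (key x b x' d gxb gx'd gxd nxd hxb hx'd gx'b nxx' nbd).
- apply: (key x' d x b gx'd gxb gx'b nx'b hx'd hxb).
  + by [].
  + by rewrite gsym.
  + by rewrite gsym.
- by apply: (NK gsym ch gxb gx'd gxd gx'b nxx' nbd).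
Qed.
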